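(* Let $G$ be a finite vertex-labeled graph, $r\ge1$, and $v,w$ vertices of $G$ such that: (i) there is a label-preserving graph isomorphism $\varphi$ from $\mathcal S(v;1,2r)$ onto $\mathcal S(w;1,2r)$ satisfying $\mathrm d(w,\varphi(x))=\mathrm d(v,x)$ for every vertex $x$ of $\mathcal S(v;1,2r)$; (ii) $\mathrm d(v,w)>2r$; (iii) the graph $G'$ obtained from $G$ by switching $\mathcal N_1(v)$ and $\mathcal N_1(w)$ is not isomorphic to $G$ (as a labeled graph). Then $G$ and $G'$ have the same multiset of rooted labeled $r$-neighborhoods; in particular $G$ is not identifiable from its $r$-neighborhoods.
   Context: $\mathrm d$ denotes graph distance in $G$. For $t>s>0$, the shell $\mathcal S(v;s,t)$ is the subgraph of $G$ formed by all edges both of whose endpoints have distance from $v$ between $s$ and $t$ inclusive (together with the endpoints of these edges, so it has no isolated vertices). ''Switching $\mathcal N_1(v)$ and $\mathcal N_1(w)$'' means: $G'$ has the same vertex set as $G$; $v$ and $w$ exchange labels; every neighbor of $v$ that is not a vertex of $\mathcal S(v;1,2r)$ is made adjacent to $w$ instead of $v$, and every neighbor of $w$ that is not a vertex of $\mathcal S(w;1,2r)$ is made adjacent to $v$ instead of $w$; all other edges and labels are unchanged. The $r$-neighborhood $\mathcal N_r(u)$ is the subgraph induced by vertices at distance at most $r$ from $u$, rooted at $u$, with labels, up to root- and label-preserving isomorphism. $G$ is identifiable from its $r$-neighborhoods if every labeled graph on the same number of vertices with the same multiset $\{\mathcal N_r(u)\}$ is isomorphic to $G$. *)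

(* Defs.v *)
From mathcomp Require Import all_boot.
Set Implicit Arguments. Unset Strict Implicit. Unset Printing Implicit Defensive.

Definition simple_graph {T : finType} (e : rel T) := symmetric e /\ irreflexive e.

(* ball e k x = set of vertices y with graph distance d(x,y) <= k. *)
Fixpoint ball {T : finType} (e : rel T) (k : nat) (x : T) : {set T} :=
  match k with
  | 0 => [set x]
  | k'.+1 => let B := ball e k' x in B :|: [set y | [exists z in B, e z y]]
  end.

Definition dist_le {T : finType} (e : rel T) (k : nat) (x y : T) : bool :=
  y \in ball e k x.

(* s <= d(v,z) <= t   (for s >= 1) *)
Definition in_range {T : finType} (e : rel T) (v : T) (s t : nat) (z : T) : bool :=
  dist_le e t v z && ~~ dist_le e s.-1 v z.

(* vertex set of the shell S(v;s,t): endpoints of edges both of whose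
   endpoints are at distance in [s,t] from v. Its edges are exactly the
   edges of G between such vertices. *)
Definition shell_verts {T : finType} (e : rel T) (v : T) (s t : nat) : {set T} :=
  [set x | in_range e v s t x && [exists y, e x y && in_range e v s t y]].

Definition shell_iso {T : finType} {L : Type} (e : rel T) (lab : T -> L)
    (v w : T) (s t : nat) (phi : T -> T) : Prop :=
  let Sv := shell_verts e v s t in
  let Sw := shell_verts e w s t in
  [/\ {in Sv, forall x, phi x \in Sw},
      {in Sv &, injective phi},
      (forall y, y \in Sw -> exists2 x, x \in Sv & phi x = y) &
      {in Sv &, forall x y, e x y = e (phi x) (phi y)}] /\
  {in Sv, forall x, lab (phi x) = lab x} /\
  {in Sv, forall x k, dist_le e k w (phi x) = dist_le e k v x}.

Definition sw_moved {T : finType} (e : rel T) (v : T) (r : nat) : {set T} :=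
  [set u | e v u && (u \notin shell_verts e v 1 (2 * r))].

Definition switch_rel {T : finType} (e : rel T) (v w : T) (r : nat) : rel T :=
  fun x y =>
    let Mv := sw_moved e v r in
    let Mw := sw_moved e w r in
    let removed := [|| (x == v) && (y \in Mv), (y == v) && (x \in Mv),
                       (x == w) && (y \in Mw) | (y == w) && (x \in Mw)] in
    let added := [|| (x == w) && (y \in Mv), (y == w) && (x \in Mv),
                     (x == v) && (y \in Mw) | (y == v) && (x \in Mw)] in
    (e x y && ~~ removed) || added.

Definition switch_lab {T : finType} {L : Type} (lab : T -> L) (v w : T) : T -> L :=
  fun x => if x == v then lab w else if x == w then lab v else lab x.

Definition labeled_iso {T1 T2 : finType} {L : Type}
    (e1 : rel T1) (l1 : T1 -> L) (e2 : rel T2) (l2 : T2 -> L) : Prop :=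
  exists f : T1 -> T2, [/\ bijective f,
    (forall x y, e1 x y = e2 (f x) (f y)) &
    (forall x, l2 (f x) = l1 x)].

Definition nbhd_iso {T1 T2 : finType} {L : Type} (r : nat)
    (e1 : rel T1) (l1 : T1 -> L) (u1 : T1)
    (e2 : rel T2) (l2 : T2 -> L) (u2 : T2) : Prop :=
  let B1 := ball e1 r u1 in
  let B2 := ball e2 r u2 in
  exists psi : T1 -> T2,
    [/\ psi u1 = u2,
        {in B1, forall x, psi x \in B2},
        {in B1 &, injective psi} &
        (forall y, y \in B2 -> exists2 x, x \in B1 & psi x = y)] /\
    {in B1 &, forall x y, e1 x y = e2 (psi x) (psi y)} /\
    {in B1, forall x, l2 (psi x) = l1 x}.

(* same multiset {N_r(u)} *)
Definition same_nbhds {T1 T2 : finType} {L : Type} (r : nat)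
    (e1 : rel T1) (l1 : T1 -> L) (e2 : rel T2) (l2 : T2 -> L) : Prop :=
  exists sigma : T1 -> T2, bijective sigma /\
    forall u, nbhd_iso r e1 l1 u e2 l2 (sigma u).

Definition identifiable {T : finType} {L : Type} (r : nat)
    (e : rel T) (lab : T -> L) : Prop :=
  forall (T' : finType) (e' : rel T') (l' : T' -> L),
    simple_graph e' -> #|T'| = #|T| ->
    same_nbhds r e lab e' l' -> labeled_iso e lab e' l'.

(* Main.v *)
Require Import Defs.
From mathcomp Require Import all_boot.
From mathcomp Require Import zify.
From Stdlib Require Import FunctionalExtensionality.
Set Implicit Arguments. Unset Strict Implicit. Unset Printing Implicit Defensive.

Section Dist.
Variables (T : finType) (e : rel T).

Lemma dist_le0 x y : dist_le e 0 x y = (y == x).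
Proof. by rewrite /dist_le /= in_set1. Qed.

Lemma dist_leS k x y :
  dist_le e k.+1 x y = dist_le e k x y || [exists z in ball e k x, e z y].
Proof. by rewrite /dist_le /= in_setU in_set. Qed.

Lemma dist_le_mono k k' x y : k <= k' -> dist_le e k x y -> dist_le e k' x y.
Proof.
move/subnK <-; elim: (k' - k) => //= n IH H.
by rewrite addSn dist_leS IH.
Qed.

Lemma dist_le_step k x y z : dist_le e k x y -> e y z -> dist_le e k.+1 x z.
Proof.
move=> H1 H2; rewrite dist_leS; apply/orP; right; apply/existsP; exists y.
by apply/andP; split.
Qed.

Lemma dist_le_trans a b x y z :
  dist_le e a x y -> dist_le e b y z -> dist_le e (a + b) x z.
Proof.
elim: b z => [|b IH] z Hxy; first by rewrite dist_le0 addn0 => /eqP ->.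
rewrite dist_leS => /orP[H|/existsP[z' /andP[H1 H2]]].
  by apply: dist_le_mono (IH _ Hxy H); lia.
by rewrite addnS; apply: dist_le_step (IH _ Hxy H1) H2.
Qed.

Lemma dist_le_pred k x y :
  dist_le e k x y -> y = x \/ exists z, dist_le e k.-1 x z /\ e z y.
Proof.
elim: k y => [|k IH] y; first by rewrite dist_le0 => /eqP; left.
rewrite dist_leS => /orP[/IH [->|[z [Hz Hzy]]] | /existsP[z /andP[H1 H2]]].
- by left.
- right; exists z; split => //; apply: dist_le_mono Hz; lia.
- by right; exists z.
Qed.

Lemma dist_le1 x y : dist_le e 1 x y = (y == x) || e x y.
Proof.
rewrite dist_leS dist_le0; congr orb; apply/existsP/idP => [[z /andP[]]|H].
  by rewrite /= in_set1 => /eqP ->.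
by exists x; rewrite /= in_set1 eqxx H.
Qed.

Hypothesis esym : symmetric e.

Lemma dist_le_sym k x y : dist_le e k x y -> dist_le e k y x.
Proof.
elim: k y => [|k IH] y; first by rewrite !dist_le0 eq_sym.
rewrite dist_leS => /orP[H | /existsP[z /andP[H1 H2]]].
  by apply: dist_le_mono (IH _ H).
have H3 : dist_le e 1 y z by rewrite dist_le1 esym H2 orbT.
by have := dist_le_trans H3 (IH _ H1); rewrite add1n.
Qed.
End Dist.

Section Transport.
Variables (T1 T2 : finType) (L : Type) (e1 : rel T1) (e2 : rel T2)
  (l1 : T1 -> L) (l2 : T2 -> L) (r : nat) (u1 : T1) (psi : T1 -> T2)
  (D1 : {set T1}) (D2 : {set T2}).
Hypotheses (Hu : u1 \in D1) (Hmap : {in D1, forall x, psi x \in D2})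
  (Hinj : {in D1 &, injective psi})
  (Hsurj : forall y, y \in D2 -> exists2 x, x \in D1 & psi x = y)
  (Hedge : {in D1 &, forall x y, e1 x y = e2 (psi x) (psi y)})
  (Hlab : {in D1, forall x, l2 (psi x) = l1 x})
  (Hcl1 : forall x y, x \in D1 -> dist_le e1 r.-1 u1 x -> e1 x y -> y \in D1)
  (Hcl2 : forall x y, x \in D1 -> dist_le e1 r.-1 u1 x -> e2 (psi x) y -> y \in D2).

Lemma transport_aux k : k <= r ->
  [/\ forall x, dist_le e1 k u1 x -> x \in D1,
      forall y, dist_le e2 k (psi u1) y -> y \in D2 &
      {in D1, forall x, dist_le e2 k (psi u1) (psi x) = dist_le e1 k u1 x}].
Proof.
elim: k => [_|k IH Hk].
  split => [x|y|x xD]; rewrite ?dist_le0.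
  - by move/eqP ->.
  - by move/eqP ->; apply: Hmap.
  - exact: (inj_in_eq Hinj xD Hu).
have [IH1 IH2 IH3] := IH (ltnW Hk).
have Hkr : k <= r.-1 by lia.
split => [x|y|x xD]; rewrite dist_leS.
- case/orP => [/IH1 //|/existsP[z /andP[Hz Hzx]]].
  exact: Hcl1 (IH1 _ Hz) (dist_le_mono Hkr Hz) Hzx.
- case/orP => [/IH2 //|/existsP[z /andP[Hz Hzy]]].
  have [x xD Hx] := Hsurj (IH2 _ Hz).
  apply: (Hcl2 xD); last by rewrite Hx.
  apply: dist_le_mono Hkr _; rewrite -IH3 // Hx; exact: Hz.
- rewrite dist_leS IH3 //; congr (_ || _).
  apply/existsP/existsP => [[z /andP[Hz Hzx]]|[z /andP[Hz Hzx]]].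
  + have [z0 z0D Hz0] := Hsurj (IH2 _ Hz).
    exists z0; apply/andP; split.
      change (dist_le e1 k u1 z0); rewrite -IH3 // Hz0; exact: Hz.
    by rewrite Hedge // Hz0.
  + have zD := IH1 _ Hz.
    exists (psi z); apply/andP; split.
      change (dist_le e2 k (psi u1) (psi z)); rewrite IH3 //; exact: Hz.
    by rewrite -Hedge.
Qed.

Lemma transport : nbhd_iso r e1 l1 u1 e2 l2 (psi u1).
Proof.
have [H1 H2 H3] := transport_aux (leqnn r).
rewrite /nbhd_iso /=; exists psi; split; [split|split] => //.
- move=> x Hx; change (dist_le e2 r (psi u1) (psi x)); rewrite H3 //; exact: H1.
- move=> x y Hx Hy; exact: Hinj (H1 _ Hx) (H1 _ Hy).
- move=> y Hy; have [x xD Hx] := Hsurj (H2 _ Hy); exists x => //.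
  change (dist_le e1 r u1 x); rewrite -H3 // Hx; exact Hy.
- move=> x y Hx Hy; exact: Hedge (H1 _ Hx) (H1 _ Hy).
- move=> x Hx; exact: Hlab (H1 _ Hx).
Qed.
End Transport.

Lemma switch_rel_sym (T : finType) (e : rel T) v w r :
  switch_rel e w v r = switch_rel e v w r.
Proof.
apply: functional_extensionality => x; apply: functional_extensionality => y.
rewrite /switch_rel /=.
case: (x == v); case: (y == v); case: (x == w); case: (y == w);
case: (x \in sw_moved e v r); case: (y \in sw_moved e v r);
case: (x \in sw_moved e w r); case: (y \in sw_moved e w r); case: (e x y) => //.
Qed.

Section Gen.
Variables (T : finType) (e : rel T) (r : nat).
Hypotheses (Hsg : simple_graph e) (Hr : 1 <= r).
Let esym : symmetric e := Hsg.1.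
Let eirr : irreflexive e := Hsg.2.

Lemma in_rangeE v t z : in_range e v 1 t z = dist_le e t v z && (z != v).
Proof. by rewrite /in_range dist_le0. Qed.

Lemma shellE v t x : (x \in shell_verts e v 1 t) =
  in_range e v 1 t x && [exists y, e x y && in_range e v 1 t y].
Proof. by rewrite inE. Qed.

Lemma movedE v x : (x \in sw_moved e v r) =
  e v x && (x \notin shell_verts e v 1 (2 * r)).
Proof. by rewrite inE. Qed.

Lemma shell_dist v x : x \in shell_verts e v 1 (2*r) -> dist_le e (2*r) v x.
Proof. by rewrite shellE in_rangeE => /andP[/andP[-> _]]. Qed.

Lemma shell_neq v x : x \in shell_verts e v 1 (2*r) -> x != v.
Proof. by rewrite shellE in_rangeE => /andP[/andP[_ ->]]. Qed.

Lemma shell_notmoved v x : x \in shell_verts e v 1 (2*r) -> x \notin sw_moved e v r.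
Proof. by move=> H; rewrite movedE H andbF. Qed.

Lemma moved_adj v x : x \in sw_moved e v r -> e v x.
Proof. by rewrite movedE => /andP[]. Qed.

Lemma moved_neq v x : x \in sw_moved e v r -> x != v.
Proof. by move/moved_adj; apply: contraTneq => ->; rewrite eirr. Qed.

Lemma adj_dist v x k : 1 <= k -> e v x -> dist_le e k v x.
Proof. by move=> Hk H; apply: dist_le_mono Hk _; rewrite dist_le1 H orbT. Qed.

Lemma moved_leaf v x y : x \in sw_moved e v r -> e x y -> y = v.
Proof.
move=> Hm Hxy; have Hvx := moved_adj Hm; have Hxv := moved_neq Hm.
move: Hm; rewrite movedE => /andP[_ Hns]; apply/eqP; apply: contraNT Hns => Hyv.
rewrite shellE !in_rangeE Hxv andbT; apply/andP; split.
  by apply: adj_dist => //; lia.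
apply/existsP; exists y; rewrite in_rangeE Hxy Hyv andbT /=.
apply: dist_le_mono (dist_le_step (adj_dist (leqnn 1) Hvx) Hxy); lia.
Qed.

Lemma near v u : dist_le e (2*r) v u ->
  [\/ u = v, u \in sw_moved e v r | u \in shell_verts e v 1 (2*r)].
Proof.
move=> H; have [->|uv] := eqVneq u v; first by constructor 1.
case Evu: (e v u).
  case Hs: (u \in shell_verts e v 1 (2*r)); first by constructor 3.
  by constructor 2; rewrite movedE Evu Hs.
constructor 3.
have [Euv|[z [Hz Hzu]]] := dist_le_pred H; first by move: uv; rewrite Euv eqxx.
have zv : z != v by apply: contraFneq Evu => zv; rewrite -zv.
rewrite shellE !in_rangeE H uv /=; apply/existsP; exists z.
rewrite in_rangeE esym Hzu zv andbT /=; apply: dist_le_mono Hz; lia.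
Qed.

Section Sw.
Variables (v w : T).
Hypothesis Hvw : ~~ dist_le e (2*r) v w.
Local Notation Mv := (sw_moved e v r).
Local Notation Mw := (sw_moved e w r).
Local Notation Sv := (shell_verts e v 1 (2*r)).
Local Notation Sw := (shell_verts e w 1 (2*r)).
Local Notation e' := (switch_rel e v w r).

Lemma far_vw a b x : a + b <= 2 * r -> dist_le e a v x -> dist_le e b w x -> False.
Proof.
move=> Hab Ha Hb; move/negP: Hvw; apply; apply: dist_le_mono Hab _.
exact: dist_le_trans Ha (dist_le_sym esym Hb).
Qed.

Lemma wv_neq : (w == v) = false.
Proof.
apply/eqP => wv; apply: (@far_vw 0 0 v); rewrite ?dist_le0 ?wv //; lia.
Qed.

Lemma vw_neq : (v == w) = false.
Proof. by rewrite eq_sym wv_neq. Qed.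

Lemma w_notMv : w \notin Mv.
Proof.
apply/negP => /moved_adj H; apply: (@far_vw 1 0 w); rewrite ?dist_le0 //.
  lia.
exact: adj_dist.
Qed.

Lemma v_notMw : v \notin Mw.
Proof.
apply/negP => /moved_adj H; apply: (@far_vw 0 1 v); rewrite ?dist_le0 //.
  lia.
exact: adj_dist.
Qed.

Lemma Mv_notMw x : x \in Mv -> x \notin Mw.
Proof.
move=> /moved_adj H1; apply/negP => /moved_adj H2; apply: (@far_vw 1 1 x).
  lia.
all: exact: adj_dist.
Qed.

Lemma v_notSw : v \notin Sw.
Proof.
apply/negP => /shell_dist H; apply: (@far_vw 0 (2*r) v) => //.
by rewrite dist_le0.
Qed.

Lemma Mv_notSw x : x \in Mv -> x \notin Sw.
Proof.
move=> Hm; apply/negP; rewrite shellE => /andP[_ /existsP[y /andP[Hxy]]].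
rewrite in_rangeE => /andP[Hd _].
have Hyv := moved_leaf Hm Hxy; rewrite Hyv in Hd.
by apply: (@far_vw 0 (2*r) v) => //; rewrite dist_le0.
Qed.

Lemma sw_far x y : x != v -> x != w -> y != v -> y != w -> e' x y = e x y.
Proof.
move=> xv xw yv yw.
rewrite /switch_rel (negbTE xv) (negbTE xw) (negbTE yv) (negbTE yw) /=.
by rewrite orbF andbT.
Qed.

Lemma sw_nbr z y : e' z y ->
  [\/ (z == w) && (y \in Mv), (y == w) && (z \in Mv),
      ((z == v) && (y \in Mw)) || ((y == v) && (z \in Mw)) |
      [&& e z y, ~~ ((z == w) && (y \in Mw)) & ~~ ((y == v) && (z \in Mv))]].
Proof.
rewrite /switch_rel /= => /orP[/andP[Ezy]|].
  rewrite !negb_or => /and4P[H1 H2 H3 H4]; constructor 4.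
  by rewrite Ezy H2 H3.
case/or4P => H; [constructor 1|constructor 2|constructor 3|constructor 3];
  by rewrite ?H ?orbT.
Qed.

Lemma sw_sym : symmetric e'.
Proof.
move=> x y; rewrite /switch_rel /= esym.
case: (x == v); case: (y == v); case: (x == w); case: (y == w);
case: (x \in Mv); case: (y \in Mv);
case: (x \in Mw); case: (y \in Mw); case: (e y x) => //.
Qed.

Lemma sw_irr : irreflexive e'.
Proof.
move=> x; rewrite /switch_rel /= eirr /=.
apply/negP => /or4P[] /andP[/eqP -> H].
- by move: w_notMv; rewrite H.
- by move: w_notMv; rewrite H.
- by move: v_notMw; rewrite H.
- by move: v_notMw; rewrite H.
Qed.

Lemma sw_lab_sym (L : Type) (lab : T -> L) : switch_lab lab w v = switch_lab lab v w.
Proof.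
apply: functional_extensionality => x; rewrite /switch_lab.
case: (eqVneq x w) => [->|xw]; first by rewrite wv_neq.
by [].
Qed.


Section V.
Variables (L : Type) (lab : T -> L) (phi : T -> T).
Hypothesis Hphi : shell_iso e lab v w 1 (2*r) phi.

Lemma phi_map x : x \in Sv -> phi x \in Sw.
Proof. by move: Hphi; rewrite /shell_iso /= => -[[H _ _ _] _]; apply: H. Qed.
Lemma phi_inj : {in Sv &, injective phi}.
Proof. by move: Hphi; rewrite /shell_iso /= => -[[_ H _ _] _]. Qed.
Lemma phi_surj y : y \in Sw -> exists2 x, x \in Sv & phi x = y.
Proof. by move: Hphi; rewrite /shell_iso /= => -[[_ _ H _] _]; apply: H. Qed.
Lemma phi_edge : {in Sv &, forall x y, e x y = e (phi x) (phi y)}.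
Proof. by move: Hphi; rewrite /shell_iso /= => -[[_ _ _ H] _]. Qed.
Lemma phi_lab : {in Sv, forall x, lab (phi x) = lab x}.
Proof. by move: Hphi; rewrite /shell_iso /= => -[_ [H _]]. Qed.
Lemma phi_dist : {in Sv, forall x k, dist_le e k w (phi x) = dist_le e k v x}.
Proof. by move: Hphi; rewrite /shell_iso /= => -[_ [_ H]]. Qed.

Definition phiinv (y : T) : T :=
  if [pick x in Sv | phi x == y] is Some x then x else y.

Lemma phiinvP y : y \in Sw -> phiinv y \in Sv /\ phi (phiinv y) = y.
Proof.
move=> Hy; rewrite /phiinv; case: pickP => [x /andP[xS /eqP <-]|H].
  by split.
have [x xS Hx] := phi_surj Hy; by move: (H x); rewrite xS Hx eqxx.
Qed.

Lemma phiK x : x \in Sv -> phiinv (phi x) = x.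
Proof. move=> xS; have [H1 H2] := phiinvP (phi_map xS); exact: phi_inj H1 xS H2. Qed.

Lemma phiinv_iso : shell_iso e lab w v 1 (2*r) phiinv.
Proof.
rewrite /shell_iso /=; split; [split|split].
- by move=> y yS; exact: (phiinvP yS).1.
- move=> y1 y2 H1 H2 E; by rewrite -(phiinvP H1).2 -(phiinvP H2).2 E.
- move=> x xS; exists (phi x); [exact: phi_map | exact: phiK].
- move=> y1 y2 H1 H2; have [a1 b1] := phiinvP H1; have [a2 b2] := phiinvP H2.
  by rewrite -{1}b1 -{1}b2 (phi_edge a1 a2).
- move=> y H; have [a b] := phiinvP H; by rewrite -{2}b phi_lab.
- move=> y H k; have [a b] := phiinvP H; by rewrite -{2}b phi_dist.
Qed.

Lemma phi_props s : s \in Sv ->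
  [/\ phi s \in Sw, phi s != w, phi s != v, phi s \notin Mv & phi s \notin Mw].
Proof.
move=> sS; have H := phi_map sS; split => //.
- exact: shell_neq H.
- by apply: contraNneq v_notSw => <-.
- by apply: contraTN H => /Mv_notSw.
- exact: shell_notmoved H.
Qed.


Definition psiv x := if x == v then w else if x \in Mv then x else phi x.
Definition chi y := if y == w then v else if y \in Mv then y else phiinv y.
Local Notation D1 := ([set v] :|: Mv :|: Sv).
Local Notation D2 := ([set w] :|: Mv :|: Sw).

Lemma D1P x : x \in D1 -> [\/ x = v, x \in Mv | x \in Sv].
Proof.
by rewrite !in_setU in_set1 => /orP[/orP[/eqP|]|]; [constructor 1|constructor 2|constructor 3].
Qed.
Lemma D2P x : x \in D2 -> [\/ x = w, x \in Mv | x \in Sw].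
Proof.
by rewrite !in_setU in_set1 => /orP[/orP[/eqP|]|]; [constructor 1|constructor 2|constructor 3].
Qed.
Lemma inD1_v : v \in D1. Proof. by rewrite !in_setU in_set1 eqxx. Qed.
Lemma inD1_M x : x \in Mv -> x \in D1. Proof. by move=> H; rewrite !in_setU H orbT. Qed.
Lemma inD1_S x : x \in Sv -> x \in D1. Proof. by move=> H; rewrite !in_setU H orbT. Qed.
Lemma inD2_w : w \in D2. Proof. by rewrite !in_setU in_set1 eqxx. Qed.
Lemma inD2_M x : x \in Mv -> x \in D2. Proof. by move=> H; rewrite !in_setU H orbT. Qed.
Lemma inD2_S x : x \in Sw -> x \in D2. Proof. by move=> H; rewrite !in_setU H orbT. Qed.

Lemma M_neqw x : x \in Mv -> x != w.
Proof. by move=> H; apply: contraNneq w_notMv => <-. Qed.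

Lemma psiv_v : psiv v = w. Proof. by rewrite /psiv eqxx. Qed.
Lemma psiv_M x : x \in Mv -> psiv x = x.
Proof. by move=> H; rewrite /psiv (negbTE (moved_neq H)) H. Qed.
Lemma psiv_S x : x \in Sv -> psiv x = phi x.
Proof. by move=> H; rewrite /psiv (negbTE (shell_neq H)) (negbTE (shell_notmoved H)). Qed.
Lemma chi_w : chi w = v. Proof. by rewrite /chi eqxx. Qed.
Lemma chi_M x : x \in Mv -> chi x = x.
Proof. by move=> H; rewrite /chi (negbTE (M_neqw H)) H. Qed.
Lemma chi_S y : y \in Sw -> chi y = phiinv y.
Proof.
move=> H; rewrite /chi (negbTE (shell_neq H)).
by have -> : (y \in Mv) = false by apply: negbTE; apply: contraTN H => /Mv_notSw.
Qed.

Lemma psiv_in x : x \in D1 -> psiv x \in D2 /\ chi (psiv x) = x.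
Proof.
case/D1P => [->|H|H].
- by rewrite psiv_v chi_w inD2_w.
- by rewrite psiv_M // chi_M // inD2_M.
- have [P1 _ _ _ _] := phi_props H.
  by rewrite psiv_S // chi_S // phiK // inD2_S.
Qed.

Lemma chi_in y : y \in D2 -> chi y \in D1 /\ psiv (chi y) = y.
Proof.
case/D2P => [->|H|H].
- by rewrite chi_w psiv_v inD1_v.
- by rewrite chi_M // psiv_M // inD1_M.
- have [P1 P2] := phiinvP H.
  by rewrite chi_S // psiv_S // P2 inD1_S.
Qed.

Lemma psiv_props x : x \in D1 -> psiv x != v /\ psiv x \notin Mw.
Proof.
case/D1P => [->|H|H].
- by rewrite psiv_v wv_neq; split => //; apply/negP => /moved_neq; rewrite eqxx.
- by rewrite psiv_M // moved_neq // Mv_notMw.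
- by have [_ _ P3 _ P5] := phi_props H; rewrite psiv_S.
Qed.

Lemma psiv_edge : {in D1 &, forall x y, e x y = e' (psiv x) (psiv y)}.
Proof.
have c_vM y : y \in Mv -> e v y = e' w y.
  move=> H; rewrite (moved_adj H) /switch_rel /= eqxx H /=.
  by rewrite orbT.
have c_vS y : y \in Sv -> e v y = e' w (phi y).
  move=> H; have [_ pw pv pM pMw] := phi_props H.
  rewrite /switch_rel /= eqxx wv_neq (negbTE pw) (negbTE pv) (negbTE pM) (negbTE pMw) /=.
  rewrite ?orbF ?andbT.
  have := phi_dist H 1; rewrite !dist_le1 (negbTE pw) (negbTE (shell_neq H)) /=.
  by move=> ->.
have c_MM x y : x \in Mv -> y \in Mv -> e x y = e' x y.
  move=> Hx Hy; rewrite sw_far //; by rewrite ?(moved_neq Hx) ?(moved_neq Hy) ?(M_neqw Hx) ?(M_neqw Hy).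
have c_MS x y : x \in Mv -> y \in Sv -> e x y = e' x (phi y).
  move=> Hx Hy; have [_ pw pv _ _] := phi_props Hy.
  rewrite sw_far ?(moved_neq Hx) ?(M_neqw Hx) //.
  have -> : e x y = false by apply/negP => /(moved_leaf Hx) yv; move: (shell_neq Hy); rewrite yv eqxx.
  by symmetry; apply/negP => /(moved_leaf Hx) yv; move: pv; rewrite yv eqxx.
have c_SS x y : x \in Sv -> y \in Sv -> e x y = e' (phi x) (phi y).
  move=> Hx Hy; have [_ xw xv _ _] := phi_props Hx; have [_ yw yv _ _] := phi_props Hy.
  by rewrite sw_far // phi_edge.
move=> x y /D1P[->|xM|xS] /D1P[->|yM|yS].
- by rewrite psiv_v eirr sw_irr.
- by rewrite psiv_v (psiv_M yM) c_vM.
- by rewrite psiv_v (psiv_S yS) c_vS.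
- by rewrite psiv_v (psiv_M xM) esym sw_sym c_vM.
- by rewrite (psiv_M xM) (psiv_M yM) c_MM.
- by rewrite (psiv_M xM) (psiv_S yS) c_MS.
- by rewrite psiv_v (psiv_S xS) esym sw_sym c_vS.
- by rewrite (psiv_M yM) (psiv_S xS) esym sw_sym c_MS.
- by rewrite (psiv_S xS) (psiv_S yS) c_SS.
Qed.

Lemma psiv_lab : {in D1, forall x, switch_lab lab v w (psiv x) = lab x}.
Proof.
move=> x /D1P[->|H|H]; rewrite /switch_lab.
- by rewrite psiv_v wv_neq eqxx.
- by rewrite psiv_M // (negbTE (moved_neq H)) (negbTE (M_neqw H)).
- have [_ pw pv _ _] := phi_props H.
  by rewrite psiv_S // (negbTE pw) (negbTE pv) phi_lab.
Qed.

Lemma V_case u : (u == v) || (u \in Mv) || ((u \in Sv) && dist_le e r v u) ->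
  nbhd_iso r e lab u e' (switch_lab lab v w) (psiv u).
Proof.
move=> Hu0.
have [uD Hu] : u \in D1 /\ dist_le e r v u.
  case/orP: Hu0 => [/orP[/eqP->|H]|/andP[H1 H2]].
  - by rewrite inD1_v; split => //; apply: (@dist_le_mono _ _ 0); rewrite ?dist_le0.
  - by rewrite inD1_M //; split => //; apply: adj_dist (moved_adj H).
  - by rewrite inD1_S.
have Hx2 x : dist_le e r.-1 u x -> dist_le e (2*r).-1 v x.
  move=> H; apply: dist_le_mono (dist_le_trans Hu H); lia.
apply: (@transport _ _ _ e e' lab (switch_lab lab v w) r u psiv D1 D2) => //.
- by move=> x /psiv_in [].
- move=> x y xD yD E.
  by rewrite -(psiv_in xD).2 -(psiv_in yD).2 E.
- move=> y yD; exists (chi y); [exact: (chi_in yD).1 | exact: (chi_in yD).2].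
- exact: psiv_edge.
- exact: psiv_lab.
- move=> x y _ Hx Hxy.
  have Hy : dist_le e (2*r) v y.
    apply: dist_le_mono (dist_le_step (Hx2 _ Hx) Hxy); lia.
  case: (near Hy) => [->|H|H]; [exact: inD1_v | exact: inD1_M H | exact: inD1_S H].
- move=> x y xD Hx.
  have [pv pMw] := psiv_props xD.
  case/sw_nbr => [/andP[_ H]|/andP[/eqP -> _]|/orP[/andP[H _]|/andP[_ H]]|/and3P[Ez H1 H2]].
  + exact: inD2_M.
  + exact: inD2_w.
  + by move: pv; rewrite H.
  + by move: pMw; rewrite H.
  + case: (D1P xD) Ez H1 H2 => [->|xM|xS].
    * rewrite psiv_v eqxx /= => Ewy Hy _.
      have Hd : dist_le e (2*r) w y by apply: adj_dist => //; lia.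
      case: (near Hd) => [->|H|H]; [exact: inD2_w | | exact: inD2_S H].
      by rewrite H in Hy.
    * rewrite psiv_M // => Exy _; rewrite (moved_leaf xM Exy) eqxx xM.
      by [].
    * rewrite psiv_S // => Exy _ _.
      have [_ pw _ _ _] := phi_props xS.
      have Hd : dist_le e (2*r) w y.
        apply: dist_le_mono (dist_le_step (k := (2*r).-1) _ Exy); first lia.
        by rewrite phi_dist // Hx2.
      case: (near Hd) => [->|H|H]; [exact: inD2_w | | exact: inD2_S H].
      have E : phi x = w by apply: (moved_leaf H); rewrite esym.
      by rewrite E eqxx in pw.
Qed.

End V.
End Sw.
End Gen.

Theorem lemma2p1 (T : finType) (L : Type) (e : rel T) (lab : T -> L)
    (r : nat) (v w : T) :
  simple_graph e -> 1 <= r ->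
  (exists phi : T -> T, shell_iso e lab v w 1 (2 * r) phi) ->
  ~~ dist_le e (2 * r) v w ->
  ~ labeled_iso e lab (switch_rel e v w r) (switch_lab lab v w) ->
  same_nbhds r e lab (switch_rel e v w r) (switch_lab lab v w) /\
  ~ identifiable r e lab.
Proof.
move=> Hsg Hr [phi Hphi] Hvw Hniso.
have r2 : r <= 2 * r by lia.
have r3 : 1 + r.-1 <= r by lia.
have esym : symmetric e := Hsg.1.
have Hwv : ~~ dist_le e (2*r) w v.
  by apply: contra Hvw => H; apply: (dist_le_sym esym); exact: H.
pose phii := phiinv e r v phi.
have Hphii : shell_iso e lab w v 1 (2*r) phii := phiinv_iso Hphi.
have farr x : dist_le e r v x -> dist_le e r w x -> False.
  by move=> H1 H2; apply: (far_vw Hsg Hvw (a:=r) (b:=r) _ H1 H2); rewrite mul2n -addnn.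
have wv : (w == v) = false by apply/negP => /eqP E; apply: (farr v); rewrite -?{1}E;
  apply: (@dist_le_mono _ _ 0); rewrite ?dist_le0.
have vw : (v == w) = false by rewrite eq_sym.
pose sigma u := if u == v then w else if u == w then v
   else if (u \in shell_verts e v 1 (2*r)) && dist_le e r v u then phi u
   else if (u \in shell_verts e w 1 (2*r)) && dist_le e r w u then phii u else u.
have sigK : cancel sigma sigma.
  move=> u; rewrite /sigma.
  case: (eqVneq u v) => [->|uv]; first by rewrite wv eqxx.
  case: (eqVneq u w) => [->|uw]; first by rewrite eqxx.
  case A: ((u \in shell_verts e v 1 (2*r)) && dist_le e r v u).
    move/andP: A => [uS ud].
    have [p1 p2 p3 p4 p5] := phi_props Hsg Hr Hvw Hphi uS.
    have pd : dist_le e r w (phi u) by rewrite (phi_dist Hphi uS).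
    rewrite (negbTE p2) (negbTE p3) p1 pd.
    have -> : dist_le e r v (phi u) = false.
      by apply/negP => H; apply: (farr (phi u)).
    by rewrite andbF /= /phii (phiK Hphi uS).
  case B: ((u \in shell_verts e w 1 (2*r)) && dist_le e r w u); last by rewrite (negbTE uv) (negbTE uw) A B.
  move/andP: B => [uS ud].
  have [x1 x2] := phiinvP Hphi uS.
  have xd : dist_le e r v (phii u) by rewrite -(phi_dist Hphi x1) x2.
  have xv := shell_neq x1.
  have xw : phii u != w.
    apply/negP => /eqP E; apply: (farr w); first by rewrite -E.
    by apply: (@dist_le_mono _ _ 0); rewrite ?dist_le0.
  by rewrite (negbTE xv) (negbTE xw) x1 xd x2.
have same : same_nbhds r e lab (switch_rel e v w r) (switch_lab lab v w).
  exists sigma; split; first exact: (Bijective sigK sigK).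
  move=> u.
  case: (eqVneq u v) => [->|uv].
    have := V_case Hsg Hr Hvw Hphi (u:=v); rewrite eqxx => /(_ isT).
    by rewrite /psiv /sigma !eqxx.
  have Wc u0 : (u0 == w) || (u0 \in sw_moved e w r)
      || (u0 \in shell_verts e w 1 (2 * r)) && dist_le e r w u0 ->
      nbhd_iso r e lab u0 (switch_rel e v w r) (switch_lab lab v w)
        (psiv e r w v phii u0).
    move=> H; have := V_case Hsg Hr Hwv Hphii H.
    by rewrite switch_rel_sym (sw_lab_sym Hsg Hvw).
  case: (eqVneq u w) => [->|uw].
    have := Wc w; rewrite eqxx => /(_ isT).
    by rewrite /psiv /sigma !eqxx wv.
  case A: ((u \in shell_verts e v 1 (2*r)) && dist_le e r v u).
    have := V_case Hsg Hr Hvw Hphi (u:=u); rewrite A orbT => /(_ isT).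
    move/andP: A => [uS ud].
    by rewrite /psiv /sigma (negbTE uv) (negbTE uw) (negbTE (shell_notmoved uS)) uS ud.
  case B: ((u \in shell_verts e w 1 (2*r)) && dist_le e r w u).
    have := Wc u; rewrite B orbT => /(_ isT).
    move/andP: B => [uS ud].
    rewrite /psiv /sigma (negbTE uv) (negbTE uw) (negbTE (shell_notmoved uS)) A.
    by rewrite uS ud.
  have sigu : sigma u = u by rewrite /sigma (negbTE uv) (negbTE uw) A B.
  case Mv: (u \in sw_moved e v r).
    have := V_case Hsg Hr Hvw Hphi (u:=u); rewrite Mv orbT => /(_ isT).
    by rewrite /psiv sigu (negbTE uv) Mv.
  case Mw: (u \in sw_moved e w r).
    have := Wc u; rewrite Mw orbT => /(_ isT).
    by rewrite /psiv sigu (negbTE uw) Mw.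
  have nv : ~~ dist_le e r v u.
    apply/negP => H; have H2 : dist_le e (2*r) v u by apply: (dist_le_mono r2 H).
    case: (near Hsg Hr H2) => [E|H3|H3]; first by rewrite E eqxx in uv.
      by rewrite H3 in Mv.
    by rewrite H3 H in A.
  have nw : ~~ dist_le e r w u.
    apply/negP => H; have H2 : dist_le e (2*r) w u by apply: (dist_le_mono r2 H).
    case: (near Hsg Hr H2) => [E|H3|H3]; first by rewrite E eqxx in uw.
      by rewrite H3 in Mw.
    by rewrite H3 H in B.
  have fc x a : dist_le e r.-1 u x -> dist_le e 1 a x -> ~~ dist_le e r a u -> False.
    move=> H1 H2 H3; move/negP: H3; apply.
    exact: (dist_le_mono r3 (dist_le_trans H2 (dist_le_sym esym H1))).
  rewrite sigu.
  pose D := [set x | (x != v) && (x != w)].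
  have inD x : (x \in D) = (x != v) && (x != w) by rewrite inE.
  apply: (@transport _ _ _ e (switch_rel e v w r) lab (switch_lab lab v w) r u id D D).
  - by rewrite inD uv uw.
  - by move=> x.
  - by move=> x y _ _.
  - by move=> y yD; exists y.
  - move=> x y; rewrite !inD => /andP[xv xw] /andP[yv yw].
    by rewrite sw_far.
  - move=> x; rewrite inD => /andP[xv xw].
    by rewrite /switch_lab (negbTE xv) (negbTE xw).
  - have cl x y : dist_le e r.-1 u x -> e x y -> y \in D.
      move=> Hx Hxy; rewrite inD; apply/andP; split; apply/negP => /eqP E.
        by apply: (fc x v Hx _ nv); apply: adj_dist => //; rewrite esym -E.
      by apply: (fc x w Hx _ nw); apply: adj_dist => //; rewrite esym -E.
    by move=> x y _ Hx Hxy; exact: cl Hx Hxy.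
  - move=> x y; rewrite inD => /andP[xv xw] Hx.
    case/sw_nbr => [/andP[H _]|/andP[_ H]|/orP[/andP[H _]|/andP[_ H]]|/and3P[Ez _ _]].
    + by rewrite H in xw.
    + by exfalso; apply: (fc x v Hx _ nv); apply: adj_dist (moved_adj H).
    + by rewrite H in xv.
    + by exfalso; apply: (fc x w Hx _ nw); apply: adj_dist (moved_adj H).
    + rewrite inD; apply/andP; split; apply/negP => /eqP E.
        by apply: (fc x v Hx _ nv); apply: adj_dist => //; rewrite esym -E.
      by apply: (fc x w Hx _ nw); apply: adj_dist => //; rewrite esym -E.
split => //.
move=> Hid; apply: Hniso; apply: Hid => //.
split; [exact: sw_sym | exact: sw_irr].
Qed.
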